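(* For every positive integer $x$, $R(x)=1$ if and only if $M(x)\in\mathcal{N}$.
   Context: For a positive integer $x$, write $x=2^{k}x'$ with $x'$ odd, and define the reduced Collatz function $R(x)=(3x'+1)/2^{v}$, where $2^{v}$ is the largest power of $2$ dividing $3x'+1$ (so $R(x)=R(2^n x)$ for all $n\ge 0$). Define $M(x)=2^{-m}x$, where $m$ is the smallest natural number with $x<2^m$; thus $M(x)\in[1/2,1)$. For $n\ge 0$ let $y^*_n=(0.1\{01\}^n)_2$ in binary, where $\{01\}^n$ denotes $n$ consecutive repetitions of the block $01$ (so $y^*_0=1/2$, $y^*_1=5/8$, \dots), and let $\mathcal{N}=\{y^*_n:n\ge 0\}$. *)

(* Defs.v *)
From mathcomp Require Import all_boot all_order all_algebra.
Set Implicit Arguments. Unset Strict Implicit. Unset Printing Implicit Defensive.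
Import Order.TTheory GRing.Theory Num.Theory.

Definition oddpart (x : nat) : nat := x %/ 2 ^ logn 2 x.

Definition Rcol (x : nat) : nat :=
  let y := 3 * oddpart x + 1 in y %/ 2 ^ logn 2 y.

Lemma exists_pow2_gt (x : nat) : exists m, x < 2 ^ m.
Proof. by exists x; apply: ltn_expl. Qed.

Definition mexp (x : nat) : nat := ex_minn (exists_pow2_gt x).

Local Open Scope ring_scope.

Definition Mscale (x : nat) : rat := x%:R / (2 ^ mexp x)%N%:R.

(* y*_n = (0.1{01}^n)_2 = sum_{k=0}^n 2^{-(2k+1)} *)
Definition ystar (n : nat) : rat := \sum_(k < n.+1) (2%:R ^- (2 * k + 1)%N).

Definition inN (y : rat) : Prop := exists n : nat, y = ystar n.

(* Main.v *)
Require Import Defs.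
From mathcomp Require Import all_boot all_order all_algebra.
From mathcomp Require Import zify ring lra.
Import Order.TTheory GRing.Theory Num.Theory.
Local Open Scope ring_scope.

Lemma ystarE n : ystar n = (4 ^ n.+1 - 1)%N%:R / (3 * 2 ^ (2 * n + 1))%N%:R.
Proof.
rewrite /ystar; elim: n => [|n IH].
  by rewrite big_ord1 /=.
rewrite big_ord_recr /= IH.
have h4 : (4 ^ n.+2 - 1 = 4 * (4 ^ n.+1 - 1) + 3)%N.
  have : (1 <= 4 ^ n.+1)%N by rewrite expn_gt0.
  rewrite (expnS 4 n.+1); lia.
have h2 : (2 ^ (2 * n.+1 + 1) = 4 * 2 ^ (2 * n + 1))%N.
  by rewrite -[4%N]/(2 ^ 2)%N -expnD; congr (expn _ _); lia.
rewrite h4 h2.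
have hB : (2%:R ^+ (2 * n + 1) : rat) = (2 ^ (2 * n + 1))%N%:R by rewrite natrX.
have -> : (2 * n.+1 + 1 = 2 + (2 * n + 1))%N by lia.
rewrite exprD hB.
have hp : ((2 ^ (2 * n + 1))%N%:R : rat) != 0 by rewrite pnatr_eq0 expn_eq0.
move: hp; move: (2 ^ (2 * n + 1))%N (4 ^ n.+1 - 1)%N => B A hp.
rewrite natrD !natrM.

field. by rewrite hp.
Qed.

Lemma decomp x : (0 < x)%N -> x = (oddpart x * 2 ^ logn 2 x)%N /\ odd (oddpart x).
Proof.
move=> x0; case: (pfactor_coprime (isT : prime 2) x0) => m hm hx.
have -> : oddpart x = m by rewrite /oddpart {1}hx mulnK // expn_gt0.
by split => //; rewrite -coprime2n.
Qed.

Lemma two_adic a b i j : odd a -> odd b -> (a * 2 ^ i = b * 2 ^ j)%N -> a = b /\ i = j.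
Proof.
wlog le_ij : a b i j / (i <= j)%N.
  move=> H oa ob e; case: (leqP i j) => h; first exact: H.
  by case: (H b a j i (ltnW h) ob oa (esym e)) => -> ->.
move=> oa ob e; rewrite -(subnK le_ij) expnD mulnA in e.
move/eqP: e; rewrite eqn_pmul2r ?expn_gt0 // => /eqP e.
have d0 : (j - i = 0)%N.
  apply/eqP; move: oa; rewrite e oddM oddX ob /=.
  by rewrite orbF.
by move: e; rewrite d0 muln1 => ->; split => //; lia.
Qed.

Lemma mexpE x j : (2 ^ j <= x < 2 ^ j.+1)%N -> mexp x = j.+1.
Proof.
move=> /andP [h1 h2]; rewrite /mexp; case: ex_minnP => m hm hmin.
apply/eqP; rewrite eqn_leq hmin //= ltnNge; apply/negP => hmj.
have := leq_pexp2l (isT : (0 < 2)%N) hmj.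
move: hm; lia.
Qed.

Lemma four_mod q : (4 ^ q %% 3 = 1)%N.
Proof. by rewrite -modnXm /= exp1n. Qed.

Lemma Mscale_ystar x n : Mscale x = ystar n <->
  (x * (3 * 2 ^ (2 * n + 1)) = (4 ^ n.+1 - 1) * 2 ^ mexp x)%N.
Proof.
rewrite /Mscale ystarE; split.
  move/eqP; rewrite eqr_div ?pnatr_eq0 ?muln_eq0 ?expn_eq0 //.
  by rewrite -!natrM eqr_nat => /eqP.
move=> e; apply/eqP; rewrite eqr_div ?pnatr_eq0 ?muln_eq0 ?expn_eq0 //.
by rewrite -!natrM e.
Qed.

Local Close Scope ring_scope.
Theorem mainTheorem2 (x : nat) : 0 < x -> (Rcol x = 1 <-> inN (Mscale x)).
Proof.
move=> x0; have [hx ox] := decomp x x0.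
set x' := oddpart x in hx ox *; set k := logn 2 x in hx.
split.
- rewrite /Rcol -/x'; set y := (3 * x' + 1)%N => Ry.
  have y0 : (0 < y)%N by rewrite /y addn1.
  have [hy _] := decomp y y0.
  have {}hy : y = (2 ^ logn 2 y)%N by rewrite {1}hy /oddpart Ry mul1n.
  set l := logn 2 y in hy.
  have l2 : (l = 2 * (l %/ 2) + l %% 2)%N by rewrite mulnC -divn_eq.
  have lodd : (l %% 2 = 0)%N.
    move: (hy) (four_mod (l %/ 2)) (ltn_mod l 2); rewrite {1}l2 expnD expnM /=.
    case: (l %% 2) => [|[|r]] //=; rewrite /y (_ : 2 ^ 2 = 4)//; lia.
  move: hy; rewrite l2 lodd addn0 expnM /= /y.
  case: (l %/ 2)%N => [|q] hq.
    by move: ox; rewrite /= in hq; have -> : x' = 0%N by lia.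
  exists q; apply/Mscale_ystar.
  have hm : mexp x = (k + 2 * q).+1.
    rewrite (_ : 2 ^ 2 = 4)// in hq.
    have e1 : (2 ^ (k + 2 * q) = 2 ^ k * 4 ^ q)%N by rewrite expnD expnM.
    have e2 : (2 ^ (k + 2 * q).+1 = 2 ^ k * (4 ^ q * 2))%N by rewrite expnS e1; lia.
    apply: mexpE; rewrite e1 e2 hx [x' * _]mulnC ltn_pmul2l ?leq_pmul2l ?expn_gt0 //.
    move: hq; rewrite expnS; have : (0 < 4 ^ q)%N by rewrite expn_gt0.
    lia.
  rewrite hm -hq (_ : (3 * x' + 1 - 1 = 3 * x')%N); last lia.
  rewrite hx -addnS (expnD 2 k) addn1.
  move: (2 ^ k)%N (2 ^ (2 * q))%N => P Q; ring.
- case=> n /Mscale_ystar e.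
  have hO : (4 ^ n.+1 - 1).+1 = (4 ^ n.+1)%N.
    by rewrite subn1 prednK // expn_gt0.
  have oO : odd (4 ^ n.+1 - 1).
    by apply/negPn; rewrite -oddS hO oddX.
  have {}e : ((x' * 3) * 2 ^ (k + (2 * n + 1)) = (4 ^ n.+1 - 1) * 2 ^ mexp x)%N.
    rewrite -e {1}hx expnD.
    move: (2 ^ k)%N (2 ^ (2 * n + 1))%N => P Q; ring.
  have oa : odd (x' * 3) by rewrite oddM ox.
  have [e1 _] := two_adic _ _ _ _ oa oO e.
  rewrite /Rcol -/x' mulnC e1 addn1 hO -[4%N]/(2 ^ 2)%N -expnM.
  by rewrite pfactorK // divnn expn_gt0.
Qed.
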